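(* Let $\vec r_1,\vec r_2$ be in the closed unit ball of $\mathbb{R}^3$, both orthogonal to $(0,0,1)$, with $r_i=|\vec r_i|$. Then for every $p\ge1$, $$D^p_{z,p}(\rho(\vec r_1),\rho(\vec r_2))=2^{p-1}\Big(1-\sqrt{1-\max(r_1^2,r_2^2)}\Big).$$ In particular, if $r_1\ge r_2$, then $D^p_{z,p}(\rho(\vec r_1),\rho(\vec r_2))=D^p_{z,p}(\rho(\vec r_2),\rho(\vec r_1))=D^p_{z,p}(\rho(\vec r_1),\rho(\vec r_1))$.
   Context: Qubit setting: $\mathcal{H}=\mathbb{C}^2$, $\mathcal{H}^*$ is identified with $\mathbb{C}^2$ via the dual basis, and $A^T$ is the usual matrix transpose; operators on $\mathcal{H}\otimes\mathcal{H}^*$ are $4\times4$ matrices in the basis $e_1\otimes e_1^*,e_1\otimes e_2^*,e_2\otimes e_1^*,e_2\otimes e_2^*$. $\sigma_x=\begin{pmatrix}0&1\\1&0\end{pmatrix}$, $\sigma_y=\begin{pmatrix}0&-i\\i&0\end{pmatrix}$, $\sigma_z=\begin{pmatrix}1&0\\0&-1\end{pmatrix}$, $\vec\sigma=(\sigma_x,\sigma_y,\sigma_z)$, and $\rho(\vec r)=\tfrac12(I+\vec r\cdot\vec\sigma)$ for $|\vec r|\le1$. The set of couplings of states $\rho,\omega$ is $\mathcal{C}(\rho,\omega)=\{\Pi\in\mathcal{S}(\mathcal{H}\otimes\mathcal{H}^* ):\mathrm{tr}_{\mathcal{H}^*}[\Pi]=\omega,\ \mathrm{tr}_{\mathcal{H}}[\Pi]=\rho^T\}$.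 For $p\ge1$, $C_{z,p}=|\sigma_z\otimes I^T-I\otimes\sigma_z^T|^p=\mathrm{diag}(0,2^p,2^p,0)$, and $D_{z,p}(\rho,\omega)=\big(\min_{\Pi\in\mathcal{C}(\rho,\omega)}\mathrm{tr}[\Pi C_{z,p}]\big)^{1/p}$. *)

(* Defs.v *)
From HB Require Import structures.
From mathcomp Require Import all_boot all_order all_algebra.
From mathcomp Require Import complex.
From mathcomp Require Import reals exp.

Set Implicit Arguments. Unset Strict Implicit. Unset Printing Implicit Defensive.
Import Order.TTheory GRing.Theory Num.Theory.
Local Open Scope ring_scope.
Local Open Scope complex_scope.

Section QOT.
Variable R : realType.
Local Notation C := R[i].

Definition adjmx (m n : nat) (A : 'M[C]_(m, n)) : 'M[C]_(n, m) :=
  (map_mx (@Num.conj C) A)^T.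

(* positive semidefinite: <v, A v> >= 0 for all v (order of the
   numClosedField C: real and nonnegative) *)
Definition psd (n : nat) (A : 'M[C]_n) : Prop :=
  forall v : 'cV[C]_n, 0 <= (adjmx v *m A *m v) 0 0.

Definition is_state (n : nat) (A : 'M[C]_n) : Prop :=
  adjmx A = A /\ psd A /\ \tr A = 1.

Definition sigma_x : 'M[C]_2 := \matrix_(i < 2, j < 2) (if i == j then 0 else 1).
Definition sigma_y : 'M[C]_2 :=
  \matrix_(i < 2, j < 2)
    (if i == j then 0 else if (i == 0 :> nat) then - 'i else 'i).
Definition sigma_z : 'M[C]_2 :=
  \matrix_(i < 2, j < 2) (if i == j then (if (i == 0 :> nat) then 1 else -1) else 0).

Definition bloch (r : 'rV[R]_3) : 'M[C]_2 :=
  (1 / 2%:R) *: (1%:M + (r 0 0)%:C *: sigma_x + (r 0 1)%:C *: sigma_y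
                      + (r 0 2%:R)%:C *: sigma_z).

(* Operators on H (x) H^* as 4x4 matrices; the basis vector e_i (x) e_j^*
   has index mxvec_index i j = 2 i + j. *)
Definition pidx (i j : 'I_2) : 'I_(2 * 2) := mxvec_index i j.

Definition ptr_Hstar (P : 'M[C]_(2 * 2)) : 'M[C]_2 :=
  \matrix_(i < 2, i' < 2) \sum_(j < 2) P (pidx i j) (pidx i' j).

Definition ptr_H (P : 'M[C]_(2 * 2)) : 'M[C]_2 :=
  \matrix_(j < 2, j' < 2) \sum_(i < 2) P (pidx i j) (pidx i j').

Definition coupling (rho omega : 'M[C]_2) (P : 'M[C]_(2 * 2)) : Prop :=
  is_state P /\ ptr_Hstar P = omega /\ ptr_H P = rho^T.

Definition cost_z (p : R) : 'M[C]_(2 * 2) :=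
  \matrix_(k < 2 * 2, l < 2 * 2)
    (if (k == l) && ((k == 1 :> nat) || (k == 2 :> nat))
     then (powR 2 p)%:C else 0).

(* v = D_{z,p}(rho, omega)^p = min_{P coupling} tr[P C_{z,p}] :
   the minimum is attained and equals v. *)
Definition is_Dzp_pow (p : R) (rho omega : 'M[C]_2) (v : R) : Prop :=
  (exists P, coupling rho omega P /\ \tr (P *m cost_z p) = v%:C) /\
  (forall P, coupling rho omega P -> v%:C <= \tr (P *m cost_z p)).

Definition dz_formula (p m : R) : R := powR 2 (p - 1) * (1 - Num.sqrt (1 - m)).

End QOT.

(* Main.v *)
Require Import Defs.
From HB Require Import structures.
From mathcomp Require Import all_boot all_order all_algebra.
From mathcomp Require Import complex.
From mathcomp Require Import reals exp.
From mathcomp Require Import ring lra.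
Import Order.TTheory GRing.Theory Num.Theory.
Local Open Scope ring_scope.
Local Open Scope complex_scope.
Set Implicit Arguments. Unset Strict Implicit.

Lemma ReD (R : realType) (x y : R[i]) : @complex.Re R (x + y) = @complex.Re R x + @complex.Re R y. Proof. by move: x y => [a b] [c d]. Qed.
Lemma ImD (R : realType) (x y : R[i]) : @complex.Im R (x + y) = @complex.Im R x + @complex.Im R y. Proof. by move: x y => [a b] [c d]. Qed.
Lemma ReN (R : realType) (x : R[i]) : @complex.Re R (- x) = - @complex.Re R x. Proof. by move: x => [a b]. Qed.
Lemma ImN (R : realType) (x : R[i]) : @complex.Im R (- x) = - @complex.Im R x. Proof. by move: x => [a b]. Qed.
Lemma ReM (R : realType) (x y : R[i]) : @complex.Re R (x * y) = @complex.Re R x * @complex.Re R y - @complex.Im R x * @complex.Im R y. Proof. by move: x y => [a b] [c d]. Qed.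
Lemma ImM (R : realType) (x y : R[i]) : @complex.Im R (x * y) = @complex.Re R x * @complex.Im R y + @complex.Im R x * @complex.Re R y. Proof. by move: x y => [a b] [c d]. Qed.
Lemma ReJ (R : realType) (x : R[i]) : @complex.Re R (Num.conj x) = @complex.Re R x. Proof. by move: x => [a b]. Qed.
Lemma ImJ (R : realType) (x : R[i]) : @complex.Im R (Num.conj x) = - @complex.Im R x. Proof. by move: x => [a b]. Qed.
Lemma ReV (R : realType) (x : R[i]) : @complex.Re R (x^-1) = @complex.Re R x / (@complex.Re R x ^+ 2 + @complex.Im R x ^+ 2). Proof. by move: x => [a b]. Qed.
Lemma ImV (R : realType) (x : R[i]) : @complex.Im R (x^-1) = - (@complex.Im R x / (@complex.Re R x ^+ 2 + @complex.Im R x ^+ 2)). Proof. by move: x => [a b]. Qed.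
Lemma ReC (R : realType) (k : R) : @complex.Re R (k%:C) = k. Proof. by []. Qed.
Lemma ImC (R : realType) (k : R) : @complex.Im R (k%:C) = 0. Proof. by []. Qed.
Lemma ReK (R : realType) (a b : R) : @complex.Re R (a +i* b) = a. Proof. by []. Qed.
Lemma ImK (R : realType) (a b : R) : @complex.Im R (a +i* b) = b. Proof. by []. Qed.
Lemma Re0 (R : realType) : @complex.Re R (0 : R[i]) = 0. Proof. by []. Qed.
Lemma Im0 (R : realType) : @complex.Im R (0 : R[i]) = 0. Proof. by []. Qed.
Lemma Re1 (R : realType) : @complex.Re R (1 : R[i]) = 1. Proof. by []. Qed.
Lemma Im1 (R : realType) : @complex.Im R (1 : R[i]) = 0. Proof. by []. Qed.
Lemma Rei (R : realType) : @complex.Re R ('i : R[i]) = 0. Proof. by []. Qed.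
Lemma Imi (R : realType) : @complex.Im R ('i : R[i]) = 1. Proof. by []. Qed.
Lemma Ren (R : realType) n : @complex.Re R (n%:R : R[i]) = n%:R.
Proof. elim: n => // n IH; by rewrite -addn1 !natrD ReD IH. Qed.
Lemma Imn (R : realType) n : @complex.Im R (n%:R : R[i]) = 0.
Proof. elim: n => // n IH; by rewrite -addn1 natrD ImD IH addr0. Qed.
Lemma ceqP (R : realType) (x y : R[i]) : @complex.Re R x = @complex.Re R y -> @complex.Im R x = @complex.Im R y -> x = y.
Proof. by case: x; case: y => /= ? ? ? ? -> ->. Qed.

Ltac cre := rewrite ?(ReD, ImD, ReN, ImN, ReM, ImM, ReJ, ImJ, ReV, ImV, ReC, ImC, ReK, ImK,
   Re0, Im0, Re1, Im1, Ren, Imn, Rei, Imi).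

Notation o0 := (@Ordinal (2*2) 0 erefl).
Notation o1 := (@Ordinal (2*2) 1 erefl).
Notation o2 := (@Ordinal (2*2) 2 erefl).
Notation o3 := (@Ordinal (2*2) 3 erefl).
Notation z0 := (@Ordinal 2 0 erefl).
Notation z1 := (@Ordinal 2 1 erefl).

Lemma enumI2 : enum 'I_2 = [:: ord0; lift ord0 ord0].
Proof. by rewrite enum_ordSl enum_ordSl enum_ord0. Qed.
Lemma enumP2 : enum {: 'I_2 * 'I_2} = [seq (x1, x2) | x1 <- enum 'I_2, x2 <- enum 'I_2].
Proof. by rewrite enumT unlock. Qed.
Lemma pidx_val (i j : 'I_2) : nat_of_ord (pidx i j) = (i * 2 + j)%N.
Proof.
rewrite /pidx /mxvec_index /= /enum_rank enum_rank_in.unlock val_insubd enumP2 enumI2.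
case: i => [[|[|]] ?] //; case: j => [[|[|]] ?] //=.
all: by rewrite card_prod !card_ord.
Qed.
Lemma pidx00 : pidx z0 z0 = o0. Proof. by apply: val_inj; exact: pidx_val. Qed.
Lemma pidx01 : pidx z0 z1 = o1. Proof. by apply: val_inj; exact: pidx_val. Qed.
Lemma pidx10 : pidx z1 z0 = o2. Proof. by apply: val_inj; exact: pidx_val. Qed.
Lemma pidx11 : pidx z1 z1 = o3. Proof. by apply: val_inj; exact: pidx_val. Qed.

Lemma sumI2 (V : zmodType) (F : 'I_2 -> V) : \sum_(k < 2) F k = F z0 + F z1.
Proof. by rewrite !big_ord_recr big_ord0 /= add0r; congr (F _ + F _); apply: val_inj. Qed.
Lemma sumI4 (V : zmodType) (F : 'I_(2*2) -> V) :
  \sum_(k < 2*2) F k = F o0 + F o1 + F o2 + F o3.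
Proof. by rewrite !big_ord_recr big_ord0 /= add0r; congr (F _ + F _ + F _ + F _); apply: val_inj. Qed.
Lemma sumI3 (V : zmodType) (F : 'I_3 -> V) : \sum_(k < 3) F k = F 0 + F 1 + F 2%:R.
Proof. by rewrite !big_ord_recr big_ord0 /= add0r; congr (F _ + F _ + F _); apply: val_inj. Qed.

Lemma I2_cases (i : 'I_2) : i = z0 \/ i = z1.
Proof. by case: i => [[|[|]] ?]; [left|right|]; try apply: val_inj. Qed.

Ltac fld := field; try done.

Section B.
Variable R : realType.
Variable r : 'rV[R]_3.
Lemma bloch00 : bloch r z0 z0 = ((1 + r 0 2%:R) / 2)%:C.
Proof. apply: ceqP; rewrite !mxE /=; cre; fld. Qed.
Lemma bloch01 : bloch r z0 z1 = (r 0 0 / 2) +i* (- r 0 1 / 2).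
Proof. apply: ceqP; rewrite !mxE /=; cre; fld. Qed.
Lemma bloch10 : bloch r z1 z0 = (r 0 0 / 2) +i* (r 0 1 / 2).
Proof. apply: ceqP; rewrite !mxE /=; cre; fld. Qed.
Lemma bloch11 : bloch r z1 z1 = ((1 - r 0 2%:R) / 2)%:C.
Proof. apply: ceqP; rewrite !mxE /=; cre; fld. Qed.
Lemma normsq : (r *m r^T) 0 0 = r 0 0 ^+ 2 + r 0 1 ^+ 2 + r 0 2%:R ^+ 2.
Proof. by rewrite !mxE sumI3 !mxE !expr2. Qed.
End B.

Section Q.
Variable R : realType.
Local Notation C := R[i].
Variable n : nat.

Lemma quadE (P : 'M[C]_n) (v : 'cV[C]_n) :
  (adjmx v *m P *m v) 0 0 = \sum_j (\sum_i Num.conj (v i 0) * P i j) * v j 0.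
Proof. rewrite !mxE; apply: eq_bigr => j _; rewrite !mxE; congr (_ * _).
by apply: eq_bigr => i _; rewrite !mxE. Qed.

Lemma sum2 (F : 'I_n -> C) k l : k != l -> (forall j, j != k -> j != l -> F j = 0) ->
  \sum_j F j = F k + F l.
Proof.
move=> kl H; rewrite (bigD1 k) //= (bigD1 l) /=; last by rewrite eq_sym.
rewrite big1 ?addr0 // => j /andP[jl jk]; exact: H.
Qed.

Definition vsel k l (a b : C) : 'cV[C]_n := \col_i (if i == k then a else if i == l then b else 0).

Lemma quad2 (P : 'M[C]_n) k l a b : k != l ->
  (adjmx (vsel k l a b) *m P *m (vsel k l a b)) 0 0 =
  Num.conj a * P k k * a + Num.conj a * P k l * b + Num.conj b * P l k * a + Num.conj b * P l l * b.
Proof.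
move=> kl; rewrite quadE (@sum2 _ k l kl); last first.
  by move=> j jk jl; rewrite !mxE (negbTE jk) (negbTE jl) mulr0.
rewrite !(@sum2 (fun i => Num.conj (vsel k l a b i 0) * P i _) k l kl); last first.
  by move=> j jk jl; rewrite !mxE (negbTE jk) (negbTE jl) rmorph0 mul0r.
  by move=> j jk jl; rewrite !mxE (negbTE jk) (negbTE jl) rmorph0 mul0r.
have lk : l != k by rewrite eq_sym.
rewrite !mxE !eqxx (negbTE lk); ring.
Qed.

Lemma psd_re (P : 'M[C]_n) (v : 'cV[C]_n) : psd P -> 0 <= complex.Re ((adjmx v *m P *m v) 0 0).
Proof. by move=> /(_ v); rewrite lecE => /andP[_]. Qed.

Lemma psd_cs (P : 'M[C]_n) k l : k != l -> psd P -> P l k = Num.conj (P k l) ->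
  complex.Im (P k k) = 0 -> complex.Im (P l l) = 0 ->
  [/\ complex.Re (P k l) ^+ 2 + complex.Im (P k l) ^+ 2 <= complex.Re (P k k) * complex.Re (P l l),
      0 <= complex.Re (P k k) & 0 <= complex.Re (P l l)].
Proof.
move=> kl hP hlk hk hl.
have H a b := @psd_re P (vsel k l a b) hP.
move: (H 1 0) (H 0 1) (H (complex.Re (P l l))%:C (- Num.conj (P k l)))
   (H (- P k l) (complex.Re (P k k))%:C) (H 1 (- Num.conj (P k l))).
rewrite !quad2 // hlk; cre; rewrite hk hl.
set u := complex.Re (P k k); set w := complex.Re (P l l);
set x := complex.Re (P k l); set y := complex.Im (P k l).
set N := x ^+ 2 + y ^+ 2.
move=> h1 h2 h3 h4 h5.
have u0 : 0 <= u by move: h1; congr (_ <= _); ring.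
have w0 : 0 <= w by move: h2; congr (_ <= _); ring.
have {h3} h3 : 0 <= w * (u * w - N) by move: h3; congr (_ <= _); rewrite /N; ring.
have {h4} h4 : 0 <= u * (u * w - N) by move: h4; congr (_ <= _); rewrite /N; ring.
have {h5} h5 : 0 <= u - 2 * N + w * N by move: h5; congr (_ <= _); rewrite /N; ring.
have N0 : 0 <= N by rewrite /N; nra.
split => //.
have [up|u0'] := ltP 0 u.
  by rewrite -subr_ge0; move: h4; rewrite pmulr_rge0.
have ue : u = 0 by apply/eqP; rewrite eq_le u0' u0.
move: h3 h5; rewrite ue; nra.
Qed.
End Q.


Section Lower.
Variable R : realType.
Local Notation C := R[i].

Lemma herm (P : 'M[C]_(2*2)) : adjmx P = P -> forall k l, P l k = Num.conj (P k l).
Proof. by move=> hH k l; rewrite -{2}hH !mxE conjCK. Qed.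

Lemma herm_diag (P : 'M[C]_(2*2)) : adjmx P = P -> forall k, complex.Im (P k k) = 0.
Proof.
move=> hH k; have := @herm P hH k k; move: (P k k) => [a b] /= [] => h.
have : b + b = 0 by rewrite {1}h addNr. by nra.
Qed.

Lemma tr_cost (P : 'M[C]_(2*2)) p :
  \tr (P *m cost_z p) = (powR 2 p)%:C * (P o1 o1 + P o2 o2).
Proof.
rewrite /mxtrace sumI4 !mxE !sumI4 !mxE /=.
rewrite !mulr0 !add0r !addr0; ring.
Qed.

Lemma ptrB (P : 'M[C]_(2*2)) :
  [/\ ptr_Hstar P z0 z0 = P o0 o0 + P o1 o1, ptr_Hstar P z0 z1 = P o0 o2 + P o1 o3,
      ptr_Hstar P z1 z1 = P o2 o2 + P o3 o3 & ptr_Hstar P z1 z0 = P o2 o0 + P o3 o1].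
Proof. by rewrite !mxE !sumI2 ?pidx00 ?pidx01 ?pidx10 ?pidx11. Qed.

Lemma ptrA (P : 'M[C]_(2*2)) :
  [/\ ptr_H P z0 z0 = P o0 o0 + P o2 o2, ptr_H P z0 z1 = P o0 o1 + P o2 o3,
      ptr_H P z1 z1 = P o1 o1 + P o3 o3 & ptr_H P z1 z0 = P o1 o0 + P o3 o2].
Proof. by rewrite !mxE !sumI2 ?pidx00 ?pidx01 ?pidx10 ?pidx11. Qed.

Lemma tr_costRI (P : 'M[C]_(2*2)) p :
  complex.Re (\tr (P *m cost_z p)) = powR 2 p * (complex.Re (P o1 o1) + complex.Re (P o2 o2)) /\
  complex.Im (\tr (P *m cost_z p)) = powR 2 p * (complex.Im (P o1 o1) + complex.Im (P o2 o2)).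
Proof.
rewrite /mxtrace sumI4 !mxE !sumI4 !mxE /=.
rewrite !mulr0 !add0r !addr0; cre; split; ring.
Qed.
End Lower.

Section Low2.
Variable R : realType.
Local Notation C := R[i].

Lemma powR2 (p : R) : powR 2 p = 2 * powR 2 (p - 1).
Proof.
rewrite {1}(_ : p = 1 + (p - 1)); last by ring.
rewrite (powRD (r:=1)); last by apply/implyP => _; rewrite pnatr_eq0.
by rewrite powRr1.
Qed.

Lemma lower_real (p00 p11 p22 p33 x01 y01 x02 y02 x13 y13 x23 y23 a1 b1 a2 b2 : R) :
  p00 + p11 = 1/2 -> p22 + p33 = 1/2 -> p00 + p22 = 1/2 -> p11 + p33 = 1/2 ->
  x02 + x13 = a2 / 2 -> y02 + y13 = - b2 / 2 -> x01 + x23 = a1 / 2 -> y01 + y23 = b1 / 2 ->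
  x02 ^+ 2 + y02 ^+ 2 <= p00 * p22 -> x13 ^+ 2 + y13 ^+ 2 <= p11 * p33 ->
  x01 ^+ 2 + y01 ^+ 2 <= p00 * p11 -> x23 ^+ 2 + y23 ^+ 2 <= p22 * p33 ->
  a1 ^+ 2 + b1 ^+ 2 <= 1 -> a2 ^+ 2 + b2 ^+ 2 <= 1 ->
  1 - Num.sqrt (1 - Num.max (a1 ^+ 2 + b1 ^+ 2) (a2 ^+ 2 + b2 ^+ 2)) <= 2 * (p11 + p22).
Proof.
move=> h1 h2 h3 h4 e1 e2 e3 e4 c1 c2 c3 c4 n1 n2.
have e22 : p22 = p11 by lra.
have e33 : p33 = p00 by lra.
rewrite e22 e33 in c1 c2 c3 c4.
have hb : a2 ^+ 2 + b2 ^+ 2 <= 16 * p00 * p11.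
  have -> : a2 = 2 * (x02 + x13) by rewrite e1; field.
  have -> : b2 = - 2 * (y02 + y13) by rewrite e2; field.
  have := sqr_ge0 (x02 - x13); have := sqr_ge0 (y02 - y13).
  rewrite mulrC in c2; nra.
have ha : a1 ^+ 2 + b1 ^+ 2 <= 16 * p00 * p11.
  have -> : a1 = 2 * (x01 + x23) by rewrite e3; field.
  have -> : b1 = 2 * (y01 + y23) by rewrite e4; field.
  have := sqr_ge0 (x01 - x23); have := sqr_ge0 (y01 - y23).
  rewrite mulrC in c4; nra.
set m := Num.max _ _.
have hm : m <= 16 * p00 * p11 by rewrite ge_max ha hb.
have m1 : m <= 1 by rewrite ge_max n1 n2.
have m0 : 0 <= m by rewrite le_max; apply/orP; left; nra.
have q0 : 0 <= Num.sqrt (1 - m) by apply: sqrtr_ge0.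
have q2 : Num.sqrt (1 - m) ^+ 2 = 1 - m by rewrite sqr_sqrtr // subr_ge0.
set q := Num.sqrt (1 - m) in q0 q2 *.
have e00 : p00 = 1/2 - p11 by lra.
rewrite e00 in hm.
nra.
Qed.

Lemma lower (r1 r2 : 'rV[R]_3) (P : 'M[C]_(2*2)) (p : R) :
  r1 0 2%:R = 0 -> r2 0 2%:R = 0 ->
  (r1 *m r1^T) 0 0 <= 1 -> (r2 *m r2^T) 0 0 <= 1 ->
  coupling (bloch r1) (bloch r2) P ->
  (dz_formula p (Num.max ((r1 *m r1^T) 0 0) ((r2 *m r2^T) 0 0)))%:C <= \tr (P *m cost_z p).
Proof.
move=> z1 z2 n1le n2le [[hH [hpsd htr]] [hB hA]].
have hl := herm hH; have hd := herm_diag hH.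
have [B00 B01 B11 _] := ptrB P; have [A00 A01 A11 _] := ptrA P.
rewrite hB bloch00 bloch01 bloch11 z2 in B00 B01 B11.
have tB k l : ((bloch r1)^T) k l = bloch r1 l k by rewrite mxE.
rewrite hA !tB bloch00 bloch10 bloch11 z1 in A00 A01 A11.
rewrite !normsq z1 z2 in n1le n2le *.
have [cs02 _ _] := psd_cs (k:=o0) (l:=o2) isT hpsd (hl _ _) (hd _) (hd _).
have [cs13 _ _] := psd_cs (k:=o1) (l:=o3) isT hpsd (hl _ _) (hd _) (hd _).
have [cs01 _ _] := psd_cs (k:=o0) (l:=o1) isT hpsd (hl _ _) (hd _) (hd _).
have [cs23 _ _] := psd_cs (k:=o2) (l:=o3) isT hpsd (hl _ _) (hd _) (hd _).
have [trR trI] := tr_costRI P p.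
rewrite /dz_formula lecE trR trI (powR2 p) !hd addr0 mulr0 eqxx /=.
have K0 : 0 < powR 2 (p - 1) by apply: powR_gt0.
rewrite !expr0n /= !addr0 [2 * _]mulrC -mulrA ler_pM2l //.
have rC (x y : C) : x = y -> complex.Re x = complex.Re y by move=> ->.
have iC (x y : C) : x = y -> complex.Im x = complex.Im y by move=> ->.
move: (rC _ _ B00) (rC _ _ B11) (rC _ _ A00) (rC _ _ A11) (rC _ _ B01) (iC _ _ B01)
  (rC _ _ A01) (iC _ _ A01); cre => b00 b11 a00 a11 rb ib ra ia.
apply: (@lower_real (complex.Re (P o0 o0)) _ _ (complex.Re (P o3 o3))
  (complex.Re (P o0 o1)) (complex.Im (P o0 o1)) (complex.Re (P o0 o2)) (complex.Im (P o0 o2))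
  (complex.Re (P o1 o3)) (complex.Im (P o1 o3))
  (complex.Re (P o2 o3)) (complex.Im (P o2 o3))) => //; try lra.
Qed.
End Low2.

Lemma I4_cases (k : 'I_(2*2)) : [\/ k = o0, k = o1, k = o2 | k = o3].
Proof.
case: k => [[|[|[|[|]]]] ?]; [apply: Or41|apply: Or42|apply: Or43|apply: Or44|by []];
  exact: val_inj.
Qed.

Section Up.
Variable R : realType.
Local Notation C := R[i].
Variables (a1 b1 a2 b2 m s t : R).
Definition eP (k l : nat) : C :=
  match k, l with
  | 0,0 => s%:C | 1,1 => t%:C | 2,2 => t%:C | 3,3 => s%:C
  | 0,1 => (a1/4) +i* (b1/4) | 1,0 => (a1/4) +i* (-(b1/4))
  | 2,3 => (a1/4) +i* (b1/4) | 3,2 => (a1/4) +i* (-(b1/4))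
  | 0,2 => (a2/4) +i* (-(b2/4)) | 2,0 => (a2/4) +i* (b2/4)
  | 1,3 => (a2/4) +i* (-(b2/4)) | 3,1 => (a2/4) +i* (b2/4)
  | 0,3 => (s*(a1*a2+b1*b2)/m) +i* (s*(a2*b1-a1*b2)/m)
  | 3,0 => (s*(a1*a2+b1*b2)/m) +i* (-(s*(a2*b1-a1*b2)/m))
  | 1,2 => (t*(a1*a2-b1*b2)/m) +i* (-(t*(a2*b1+a1*b2)/m))
  | 2,1 => (t*(a1*a2-b1*b2)/m) +i* (t*(a2*b1+a1*b2)/m)
  | _,_ => 0 end.
Definition Pm : 'M[C]_(2*2) := \matrix_(k, l) eP k l.

Lemma Pm_herm : adjmx Pm = Pm.
Proof.
apply/matrixP => k l; rewrite !mxE.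
by case: (I4_cases k) => ->; case: (I4_cases l) => -> /=; apply: ceqP; cre; rewrite ?opprK ?oppr0.
Qed.

Lemma Pm_tr : \tr Pm = (2 * s + 2 * t)%:C.
Proof. rewrite /mxtrace sumI4 !mxE /=; apply: ceqP; cre; ring. Qed.


Lemma Pm_quad (v : 'cV[C]_(2*2)) :
  let x k := complex.Re (v k 0) in let y k := complex.Im (v k 0) in
  complex.Im ((adjmx v *m Pm *m v) 0 0) = 0 /\
  complex.Re ((adjmx v *m Pm *m v) 0 0) =
   s * (x o0 ^+ 2 + y o0 ^+ 2 + x o3 ^+ 2 + y o3 ^+ 2) + t * (x o1 ^+ 2 + y o1 ^+ 2 + x o2 ^+ 2 + y o2 ^+ 2)
   + 2 * ((a1/4) * (x o0 * x o1 + y o0 * y o1 + x o2 * x o3 + y o2 * y o3)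
          + (b1/4) * (y o0 * x o1 - x o0 * y o1 + y o2 * x o3 - x o2 * y o3)
          + (a2/4) * (x o0 * x o2 + y o0 * y o2 + x o1 * x o3 + y o1 * y o3)
          - (b2/4) * (y o0 * x o2 - x o0 * y o2 + y o1 * x o3 - x o1 * y o3)
          + (s*(a1*a2+b1*b2)/m) * (x o0 * x o3 + y o0 * y o3)
          + (s*(a2*b1-a1*b2)/m) * (y o0 * x o3 - x o0 * y o3)
          + (t*(a1*a2-b1*b2)/m) * (x o1 * x o2 + y o1 * y o2)
          - (t*(a2*b1+a1*b2)/m) * (y o1 * x o2 - x o1 * y o2)).
Proof.
move=> x y; rewrite quadE !sumI4 !mxE /=; cre.
rewrite -/(x o0) -/(x o1) -/(x o2) -/(x o3) -/(y o0) -/(y o1) -/(y o2) -/(y o3).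
split; ring.
Qed.
End Up.

Section Qf.
Variable R : realType.
Variables (a1 b1 a2 b2 m s t x0 x1 x2 x3 y0 y1 y2 y3 : R).
Definition Qf :=
   s * (x0 ^+ 2 + y0 ^+ 2 + x3 ^+ 2 + y3 ^+ 2) + t * (x1 ^+ 2 + y1 ^+ 2 + x2 ^+ 2 + y2 ^+ 2)
   + 2 * ((a1/4) * (x0 * x1 + y0 * y1 + x2 * x3 + y2 * y3)
          + (b1/4) * (y0 * x1 - x0 * y1 + y2 * x3 - x2 * y3)
          + (a2/4) * (x0 * x2 + y0 * y2 + x1 * x3 + y1 * y3)
          - (b2/4) * (y0 * x2 - x0 * y2 + y1 * x3 - x1 * y3)
          + (s*(a1*a2+b1*b2)/m) * (x0 * x3 + y0 * y3)
          + (s*(a2*b1-a1*b2)/m) * (y0 * x3 - x0 * y3)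
          + (t*(a1*a2-b1*b2)/m) * (x1 * x2 + y1 * y2)
          - (t*(a2*b1+a1*b2)/m) * (y1 * x2 - x1 * y2)).

Lemma Qf_ge0 : 0 < s -> 0 <= t -> 16 * s * t = m ->
  a1 ^+ 2 + b1 ^+ 2 <= m -> a2 ^+ 2 + b2 ^+ 2 <= m ->
  m = a1 ^+ 2 + b1 ^+ 2 \/ m = a2 ^+ 2 + b2 ^+ 2 -> 0 <= Qf.
Proof.
move=> s0 t0 hst h1 h2 hm.
have [m0|mp] := eqVneq m 0.
  have ea1 : a1 = 0 by nra.
  have eb1 : b1 = 0 by nra.
  have ea2 : a2 = 0 by nra.
  have eb2 : b2 = 0 by nra.
  have -> : Qf = s * (x0 ^+ 2 + y0 ^+ 2 + x3 ^+ 2 + y3 ^+ 2) + t * (x1 ^+ 2 + y1 ^+ 2 + x2 ^+ 2 + y2 ^+ 2).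
    by rewrite /Qf ea1 eb1 ea2 eb2; ring.
  apply: addr_ge0; apply: mulr_ge0 => //; try lra; nra.
have ht : t = m / (16 * s) by rewrite -hst; field; lra.
have s4 : s != 0 by lra.
have m0 : 0 < m by rewrite lt0r mp /=; nra.
have hp : 0 < s * (m / 4) by apply: mulr_gt0 => //; lra.
rewrite -(pmulr_rge0 _ hp).
case: hm => hm.
- set Ar := (a1 * (s * x0 + (a1 * x1 - b1 * y1) / 4) + b1 * (s * y0 + (a1 * y1 + b1 * x1) / 4)) / 2
     + (a2 * ((a1 * x2 + b1 * y2) / 4 + s * x3) + b2 * ((a1 * y2 - b1 * x2) / 4 + s * y3)) / 2.
  set Ai := (a1 * (s * y0 + (a1 * y1 + b1 * x1) / 4) - b1 * (s * x0 + (a1 * x1 - b1 * y1) / 4)) / 2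
     + (a2 * ((a1 * y2 - b1 * x2) / 4 + s * y3) - b2 * ((a1 * x2 + b1 * y2) / 4 + s * x3)) / 2.
  set Br := (a1 * x2 + b1 * y2) / 4 + s * x3.
  set Bi := (a1 * y2 - b1 * x2) / 4 + s * y3.
  have -> : s * (m / 4) * Qf = Ar ^+ 2 + Ai ^+ 2 + (m - (a2 ^+ 2 + b2 ^+ 2)) / 4 * (Br ^+ 2 + Bi ^+ 2).
    rewrite /Qf ht /Ar /Ai /Br /Bi hm.
    by field; rewrite -hm mp s4.
  apply: addr_ge0; [apply: addr_ge0; apply: sqr_ge0| apply: mulr_ge0; [lra| nra]].
- set Ar := (a2 * (s * x0 + (a2 * x2 + b2 * y2) / 4) - b2 * (s * y0 + (a2 * y2 - b2 * x2) / 4)) / 2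
     + (a1 * ((a2 * x1 - b2 * y1) / 4 + s * x3) - b1 * ((a2 * y1 + b2 * x1) / 4 + s * y3)) / 2.
  set Ai := (a2 * (s * y0 + (a2 * y2 - b2 * x2) / 4) + b2 * (s * x0 + (a2 * x2 + b2 * y2) / 4)) / 2
     + (a1 * ((a2 * y1 + b2 * x1) / 4 + s * y3) + b1 * ((a2 * x1 - b2 * y1) / 4 + s * x3)) / 2.
  set Br := (a2 * x1 - b2 * y1) / 4 + s * x3.
  set Bi := (a2 * y1 + b2 * x1) / 4 + s * y3.
  have -> : s * (m / 4) * Qf = Ar ^+ 2 + Ai ^+ 2 + (m - (a1 ^+ 2 + b1 ^+ 2)) / 4 * (Br ^+ 2 + Bi ^+ 2).
    rewrite /Qf ht /Ar /Ai /Br /Bi hm.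
    by field; rewrite -hm mp s4.
  apply: addr_ge0; [apply: addr_ge0; apply: sqr_ge0| apply: mulr_ge0; [lra| nra]].
Qed.
End Qf.

Section Upper.
Variable R : realType.
Local Notation C := R[i].

Lemma upper (r1 r2 : 'rV[R]_3) (p : R) :
  r1 0 2%:R = 0 -> r2 0 2%:R = 0 -> (r1 *m r1^T) 0 0 <= 1 -> (r2 *m r2^T) 0 0 <= 1 ->
  exists P, coupling (bloch r1) (bloch r2) P /\
   \tr (P *m cost_z p) = (dz_formula p (Num.max ((r1 *m r1^T) 0 0) ((r2 *m r2^T) 0 0)))%:C.
Proof.
move=> z1 z2 n1le n2le.
have tB k l : ((bloch r1)^T) k l = bloch r1 l k by rewrite mxE.
have B00 := bloch00 r1; have B01 := bloch01 r1; have B10 := bloch10 r1; have B11 := bloch11 r1.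
have C00 := bloch00 r2; have C01 := bloch01 r2; have C10 := bloch10 r2; have C11 := bloch11 r2.
rewrite z1 in B00 B11; rewrite z2 in C00 C11.
rewrite !normsq z1 z2 !expr0n /= !addr0 in n1le n2le *.
set a1 := r1 0 0 in B01 B10 n1le *; set b1 := r1 0 1 in B01 B10 n1le *.
set a2 := r2 0 0 in C01 C10 n2le *; set b2 := r2 0 1 in C01 C10 n2le *.
set m := Num.max _ _.
have m1 : m <= 1 by rewrite ge_max n1le n2le.
have mn1 : a1 ^+ 2 + b1 ^+ 2 <= m by rewrite le_max lexx.
have mn2 : a2 ^+ 2 + b2 ^+ 2 <= m by rewrite le_max lexx orbT.
have m0 : 0 <= m by nra.
have q0 : 0 <= Num.sqrt (1 - m) by apply: sqrtr_ge0.
have q2 : Num.sqrt (1 - m) ^+ 2 = 1 - m by rewrite sqr_sqrtr // subr_ge0.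
set q := Num.sqrt (1 - m) in q0 q2 *.
have q1 : q <= 1 by nra.
have mc : m = a1 ^+ 2 + b1 ^+ 2 \/ m = a2 ^+ 2 + b2 ^+ 2.
  rewrite /m; case: (lerP (a1 ^+ 2 + b1 ^+ 2) (a2 ^+ 2 + b2 ^+ 2)) => h.
    by right.
  by left.
set P := Pm a1 b1 a2 b2 m ((1 + q) / 4) ((1 - q) / 4).
have [PB00 PB01 PB11 PB10] := ptrB P.
have [PA00 PA01 PA11 PA10] := ptrA P.
exists P; split; [split; [split; [|split]|split]|].
- exact: Pm_herm.
- move=> v; move: (Pm_quad a1 b1 a2 b2 m ((1 + q) / 4) ((1 - q) / 4) v) => /= [hi hr].
  rewrite lecE Im0 Re0 hi hr eqxx /=.
  have := @Qf_ge0 _ a1 b1 a2 b2 m ((1 + q) / 4) ((1 - q) / 4)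
    (complex.Re (v o0 0)) (complex.Re (v o1 0)) (complex.Re (v o2 0)) (complex.Re (v o3 0))
    (complex.Im (v o0 0)) (complex.Im (v o1 0)) (complex.Im (v o2 0)) (complex.Im (v o3 0)).
  by rewrite /Qf; apply; try lra.
- by rewrite Pm_tr; apply: ceqP; cre; fld.
- apply: (iffLR (matrixP _ _)) => i j. case: (I2_cases i) => ->; case: (I2_cases j) => ->;
  rewrite ?PB00 ?PB01 ?PB11 ?PB10 ?C00 ?C01 ?C10 ?C11 !mxE /=; apply: ceqP; cre; fld.
- apply: (iffLR (matrixP _ _)) => i j; rewrite tB; case: (I2_cases i) => ->; case: (I2_cases j) => ->;
  rewrite ?PA00 ?PA01 ?PA11 ?PA10 ?B00 ?B01 ?B10 ?B11 !mxE /=; apply: ceqP; cre; fld.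
- have [trR trI] := tr_costRI P p.
  apply: ceqP; rewrite ?trR ?trI !mxE /=; cre; rewrite /dz_formula -/q (powR2 p); fld.
Qed.
End Upper.

Lemma main_is (R : realType) (r1 r2 : 'rV[R]_3) (p : R) :
  (r1 *m r1^T) 0 0 <= 1 -> (r2 *m r2^T) 0 0 <= 1 ->
  r1 0 2%:R = 0 -> r2 0 2%:R = 0 ->
  is_Dzp_pow p (bloch r1) (bloch r2) (dz_formula p (Num.max ((r1 *m r1^T) 0 0) ((r2 *m r2^T) 0 0))).
Proof.
move=> n1 n2 z1 z2; split; first exact: upper.
by move=> P hP; apply: lower.
Qed.

Local Close Scope complex_scope.
Unset Implicit Arguments. Set Strict Implicit.
Theorem theorem3p6 (R : realType) (r1 r2 : 'rV[R]_3) :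
  (r1 *m r1^T) 0 0 <= 1 -> (r2 *m r2^T) 0 0 <= 1 ->
  r1 0 2%:R = 0 -> r2 0 2%:R = 0 ->
  forall p : R, 1 <= p ->
    let n1 := (r1 *m r1^T) 0 0 in
    let n2 := (r2 *m r2^T) 0 0 in
    is_Dzp_pow p (bloch r1) (bloch r2) (dz_formula p (Num.max n1 n2)) /\
    (n2 <= n1 ->
       is_Dzp_pow p (bloch r1) (bloch r2) (dz_formula p n1) /\
       is_Dzp_pow p (bloch r2) (bloch r1) (dz_formula p n1) /\
       is_Dzp_pow p (bloch r1) (bloch r1) (dz_formula p n1)).
Proof.
move=> h1 h2 z1 z2 p _ n1 n2.
split; first exact: main_is.
move=> h21.
have e12 : Num.max n1 n2 = n1.
  by rewrite maxEle; case: ifP => // h; apply/eqP; rewrite eq_le h21 h.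
have e21 : Num.max n2 n1 = n1 by rewrite maxEle h21.
have e11 : Num.max n1 n1 = n1 by rewrite maxEle lexx.
split; [|split].
- by rewrite -e12; exact: main_is.
- by rewrite -e21; exact: main_is.
- by rewrite -e11; exact: main_is.
Qed.
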